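(* Let $X$ be an (absolutely) continuous nonnegative integrable random variable, let $H$ be a horizon with mean $\mu:=\mathbb{E}H$, and let $p>0$ be such that $\mathbb{P}(X\ge p)=1/\mu$. Then \[\mathbb{E}M_H\le\mathbb{E}(X\mid X\ge p),\] where $M_H:=\max_{i\le H}X_i$ and $X_1,X_2,\dots$ are i.i.d. copies of $X$ independent of $H$.
   Context: A horizon is a random variable supported on a subset of $\mathbb{N}=\{1,2,\dots\}$ with finite expectation. *)

(* Defs.v *)
From HB Require Import structures.
From mathcomp Require Import all_boot all_order all_algebra.
From mathcomp Require Import all_classical all_reals all_analysis.
Set Implicit Arguments. Unset Strict Implicit. Unset Printing Implicit Defensive.
Import Order.TTheory GRing.Theory Num.Theory.
Local Open Scope classical_set_scope.
Local Open Scope ring_scope.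

(* Mutual independence of the family (H, Xs 0, Xs 1, ...): product rule
   over every finite subfamily (unused members get the event setT). *)
Definition indep_horizon_seq d (T : measurableType d) (R : realType)
  (P : probability T R) (H : T -> nat) (Xs : nat -> T -> R) : Prop :=
  forall (A : set nat) (I : seq nat) (B : nat -> set R),
    uniq I ->
    (forall i, i \in I -> measurable (B i)) ->
    P (H @^-1` A `&` \bigcap_(i in [set` I]) (Xs i @^-1` B i)) =
    (P (H @^-1` A) * \prod_(i <- I) P (Xs i @^-1` B i))%E.

Definition same_distr d (T : measurableType d) (R : realType)
  (P : probability T R) (Y X : T -> R) : Prop :=
  forall B : set R, measurable B -> P (Y @^-1` B) = P (X @^-1` B).

Definition abs_continuous_rv d (T : measurableType d) (R : realType)
  (P : probability T R) (X : T -> R) : Prop :=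
  forall B : set R, measurable B -> (@lebesgue_measure R) B = 0%E ->
    P (X @^-1` B) = 0%E.

Definition cond_exp_event d (T : measurableType d) (R : realType)
  (P : probability T R) (X : T -> R) (A : set T) : \bar R :=
  ((\int[P]_(w in A) (X w)%:E) * ((fine (P A))^-1)%:E)%E.

(* M_H(w) = max_{1 <= i <= H w} X_i(w), where X_i = Xs (i-1) *)
Definition max_upto (R : realType) (Xs : nat -> R) (n : nat) : R :=
  \big[Order.max/0]_(i < n) Xs i.

(* Main.v *)
Require Import Defs.
From HB Require Import structures.
From mathcomp Require Import all_boot all_order all_algebra.
From mathcomp Require Import all_classical all_reals all_analysis.
From mathcomp Require Import measurable_realfun.
From mathcomp Require Import lra.
Import Order.TTheory GRing.Theory Num.Theory.
Local Open Scope classical_set_scope.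
Local Open Scope ring_scope.

Section restr.
Local Open Scope ereal_scope.
Context d (T : measurableType d) (R : realType).
Import HBNNSimple.

Lemma int_nnsfun_sum (m : {measure set T -> \bar R}) D (mD : measurable D) (h : {nnsfun T >-> R}) :
  \int[m]_(x in D) (h x)%:E = \sum_(r \in range h) (r%:E * m (h @^-1` [set r] `&` D)).
Proof.
under eq_integral do rewrite fimfunE -fsumEFin//.
rewrite ge0_integral_fsum//; last 2 first.
  - by move=> r; exact/measurable_EFinP/measurableT_comp.
  - by move=> n x _; rewrite nnfun_muleindic_ge0.
rewrite /=; apply: eq_fsbigr => r _.
by rewrite integralZl_indic_nnsfun// integral_indic.
Qed.

Variables (m : {measure set T -> \bar R}) (A : set T) (mA : measurable A).

Lemma restr_nnsfun (h : {nnsfun T >-> R}) :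
  \int[mrestr m mA]_x (h x)%:E = \int[m]_(x in A) (h x)%:E.
Proof.
rewrite (int_nnsfun_sum (mrestr m mA) _ measurableT h) int_nnsfun_sum//=; apply: eq_fsbigr => r _.
by rewrite /= /mrestr setIT.
Qed.

Lemma restr_int (f : T -> \bar R) (mf : measurable_fun setT f) :
  (forall x, 0 <= f x) ->
  \int[mrestr m mA]_x f x = \int[m]_(x in A) f x.
Proof.
move=> f0; pose f_ := nnsfun_approx measurableT mf.
transitivity (limn (fun n => \int[mrestr m mA]_x (f_ n x)%:E)).
  rewrite -monotone_convergence//=.
  - apply: eq_integral => x _; apply/esym/cvg_lim => //=.
    exact: cvg_nnsfun_approx.
  - by move=> n; apply: measurableT_comp => //.
  - by move=> n x _; rewrite lee_fin.
  - by move=> x _ a b ab; rewrite lee_fin//; exact/lefP/nd_nnsfun_approx.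
transitivity (limn (fun n => \int[m]_(x in A) (f_ n x)%:E)).
  by congr (limn _); apply/funext => n; rewrite restr_nnsfun.
rewrite -monotone_convergence//=.
  - apply: eq_integral => x _; apply/cvg_lim => //=.
    exact: cvg_nnsfun_approx.
  - by move=> n; apply/measurable_EFinP/measurable_funTS.
  - by move=> n x _; rewrite lee_fin.
  - by move=> x _ a b ab; rewrite lee_fin//; exact/lefP/nd_nnsfun_approx.
Qed.
End restr.

Section Main.
Local Open Scope ereal_scope.
Context d (T : measurableType d) (R : realType).

Definition pfm (m : {measure set T -> \bar R}) {X : T -> R}
  (mX : measurable_fun setT X) : {measure set R -> \bar R} :=
  measure_function_pushforward__canonical__measure_function_Measure m mX.

Lemma meas_compH (H : T -> nat) (g : nat -> T -> R) :
  (forall n, measurable (H @^-1` [set n])) ->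
  (forall n, measurable_fun setT (g n)) ->
  measurable_fun setT (fun w => g (H w) w).
Proof.
move=> mH mg _ B mB; rewrite setTI.
have -> : (fun w => g (H w) w) @^-1` B =
    \bigcup_n (H @^-1` [set n] `&` g n @^-1` B).
  apply/seteqP; split => w /=.
    by move=> gB; exists (H w).
  by case=> n _ [/= <-].
apply: bigcupT_measurable => n; apply: measurableI => //.
by rewrite -[X in measurable X]setTI; exact: mg.
Qed.

Lemma int_decomp (P : {measure set T -> \bar R}) (H : T -> nat) (f : T -> \bar R) :
  (forall n, measurable (H @^-1` [set n])) -> measurable_fun setT f ->
  (forall x, 0 <= f x) ->
  \int[P]_x f x = \sum_(n <oo) \int[P]_(x in H @^-1` [set n]) f x.
Proof.
move=> mH mf f0.
have UT : \bigcup_n H @^-1` [set n] = setT.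
  by apply/seteqP; split => // w _; exists (H w).
transitivity (\int[P]_(x in \bigcup_n H @^-1` [set n]) f x); first by rewrite UT.
apply: ge0_integral_bigcup => //; try (by rewrite UT); try (by move=> x _; exact: f0).
apply/trivIsetP => i j _ _ ij; apply/seteqP; split => // w [/= Hi Hj].
  by move: ij; rewrite -Hi -Hj eqxx.
Qed.

Lemma indep_int (P : probability T R) (X : T -> R) (Xs : nat -> T -> R)
  (H : T -> nat) (phi : R -> R) (mphi : measurable_fun setT phi)
  (phi0 : forall x, (0 <= phi x)%R) (mX : measurable_fun setT X)
  (mXs : forall i, measurable_fun setT (Xs i))
  (mH : forall n, measurable (H @^-1` [set n])) :
  (forall i, same_distr P (Xs i) X) -> indep_horizon_seq P H Xs ->
  forall n i, \int[P]_(w in H @^-1` [set n]) (phi (Xs i w))%:E =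
    P (H @^-1` [set n]) * \int[P]_w (phi (X w))%:E.
Proof.
move=> dXs ind n i.
have mphiE : measurable_fun setT (fun y => (phi y)%:E) by exact/measurable_EFinP.
rewrite -(@restr_int _ _ _ P _ (mH n)); last 2 first.
  - exact/measurable_EFinP/measurableT_comp.
  - by move=> x; rewrite lee_fin.
have fin : P (H @^-1` [set n]) \is a fin_num.
  by rewrite ge0_fin_numE // (le_lt_trans (probability_le1 _ _)) // ltey.
pose k : {nonneg R} := NngNum (fine_ge0 (measure_ge0 P (H @^-1` [set n]))).
transitivity (\int[pfm (mrestr P (mH n)) (mXs i)]_y (phi y)%:E).
  rewrite ge0_integral_pushforward//=.
  by move=> y _; rewrite lee_fin.
transitivity (\int[mscale k (pfm P mX)]_y (phi y)%:E).
  apply: eq_measure_integral => B mB _.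
  rewrite /= /mscale /= /mrestr /pushforward /=.
  rewrite fineK // setIC.
  have := ind [set n] [:: i] (fun _ => B) erefl (fun _ _ => mB).
  rewrite set_cons1 bigcap_set1 big_seq1 => ->.
  by rewrite dXs.
rewrite ge0_integral_mscale //=; last by move=> x _; rewrite lee_fin.
by rewrite fineK // ge0_integral_pushforward //= => y _; rewrite lee_fin.
Qed.

End Main.

Lemma max_upto_ge0 (R : realType) (xs : nat -> R) n : 0 <= max_upto xs n.
Proof.
elim: n xs => [|n IH] xs; first by rewrite /max_upto big_ord0.
rewrite /max_upto big_ord_recl le_max; apply/orP; right.
rewrite (eq_bigr (fun i : 'I_n => xs i.+1)); last by move=> i _; rewrite lift0.
exact: (IH (fun i => xs i.+1)).
Qed.

Lemma max_upto_le (R : realType) (p : R) (xs : nat -> R) n : 0 <= p ->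
  max_upto xs n <= p + \sum_(i < n) Num.max (xs i - p) 0.
Proof.
move=> p0; set S := \sum_(i < n) _.
have S0 : 0 <= S by apply: sumr_ge0 => i _; rewrite le_max lexx orbT.
have tl (i : 'I_n) : xs i <= p + S.
  have h1 : xs i - p <= Num.max (xs i - p) 0 by rewrite le_max lexx.
  have h2 : Num.max (xs i - p) 0 <= S.
    rewrite /S (bigD1 i) //= lerDl; apply: sumr_ge0 => j _.
    by rewrite le_max lexx orbT.
  lra.
rewrite /max_upto; apply: (big_ind (fun x => x <= p + S)) => //.
  lra.
by move=> x y hx hy; rewrite ge_max hx hy.
Qed.

Lemma meas_bigmax d (T : measurableType d) (R : realType) (F : nat -> T -> R) n :
  (forall i, measurable_fun setT (F i)) ->
  measurable_fun setT (fun w => \big[Num.max/0]_(i < n) F i w).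
Proof.
elim: n F => [|n IH] F mF.
  have -> : (fun w => \big[Num.max/0]_(i < 0) F i w) = cst 0.
    by apply/funext => w; rewrite big_ord0.
  exact: measurable_cst.
have -> : (fun w => \big[Num.max/0]_(i < n.+1) F i w) =
    (fun w => Num.max (F 0%N w) (\big[Num.max/0]_(i < n) F i.+1 w)).
  apply/funext => w; rewrite big_ord_recl; congr (Num.max _ _).
exact: (measurable_maxr (mF 0%N) (IH (fun i => F i.+1) (fun i => mF i.+1))).
Qed.

Lemma meas_bigsum d (T : measurableType d) (R : realType) (F : nat -> T -> R) n :
  (forall i, measurable_fun setT (F i)) ->
  measurable_fun setT (fun w => \sum_(i < n) F i w).
Proof.
move=> mF; exact: measurable_sum.
Qed.

Theorem lemma3 (d : measure_display) (T : measurableType d) (R : realType)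
  (P : probability T R) (X : T -> R) (Xs : nat -> T -> R) (H : T -> nat) (p : R) :
  measurable_fun setT X ->
  abs_continuous_rv P X ->
  P [set w | X w < 0] = 0%E ->
  P.-integrable setT (EFin \o X) ->
  (forall n : nat, measurable (H @^-1` [set n])) ->
  P [set w | H w = 0%N] = 0%E ->
  (\int[P]_w ((H w)%:R : R)%:E < +oo)%E ->
  (forall i, measurable_fun setT (Xs i)) ->
  (forall i, same_distr P (Xs i) X) ->
  indep_horizon_seq P H Xs ->
  0 < p ->
  P [set w | p <= X w] = ((fine (\int[P]_w ((H w)%:R : R)%:E))^-1)%:E ->
  (\int[P]_w (max_upto (fun i => Xs i w) (H w))%:E
     <= cond_exp_event P X [set w | (p <= X w)%R])%E.
Proof.
move=> mX _ _ intX mH H0 Hfin mXs dXs ind p0 PXp.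
pose A n := H @^-1` [set n].
pose phi := fun x : R => Num.max (x - p) 0.
have mphi : measurable_fun setT phi.
  apply: measurable_maxr; last exact: measurable_cst.
  by apply: measurable_funB => //; exact: measurable_cst.
have phi0 x : 0 <= phi x by rewrite /phi le_max lexx orbT.
set mu := (\int[P]_w ((H w)%:R : R)%:E)%E in Hfin PXp *.
have mHR : measurable_fun setT (fun w => ((H w)%:R : R)).
  exact: (@meas_compH _ _ _ H (fun n _ => n%:R) mH (fun n => measurable_cst _)).
have Pge0 n : (0 <= P (A n))%E by exact: measure_ge0.
have sumP : (\sum_(n <oo) P (A n) = 1)%E.
  have := @int_decomp _ _ _ P H (cst 1%E) mH (measurable_cst _) (fun _ => lee01).
  rewrite integral_cst // mul1e => E.
  apply: (eq_trans _ (probability_setT P)); apply: (eq_trans _ (esym E)).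
  by apply: eq_eseriesr => n _; rewrite integral_cst // mul1e.
have muE : mu = (\sum_(n <oo) ((n%:R)%:E * P (A n)))%E.
  rewrite /mu (@int_decomp _ _ _ P H _ mH); last 2 first.
    - exact/measurable_EFinP.
    - by move=> x; rewrite lee_fin.
  apply: eq_eseriesr => n _.
  rewrite -(integral_cst P (mH n)); apply: eq_integral => w.
  by rewrite inE /= => ->.
have mu1 : (1 <= mu)%E.
  rewrite muE -sumP; apply: lee_nneseries => [i _ _|[|n] _]; first exact: Pge0.
    by rewrite (_ : P (A 0%N) = 0%E) ?mule0 //; exact: H0.
  by apply: lee_pemull => //; rewrite lee_fin ler1n.
have mu0 : (0 <= mu)%E by apply: le_trans mu1.
set c := fine mu in PXp.
have muc : mu = c%:E by rewrite fineK // ge0_fin_numE.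
have c1 : 1 <= c by rewrite -lee_fin -muc.
have c0 : c != 0 by rewrite gt_eqF // (lt_le_trans ltr01).
set Y := (\int[P]_w (phi (X w))%:E)%E.
have Y0 : (0 <= Y)%E by apply: integral_ge0 => w _; rewrite lee_fin.
have Yfin : Y \is a fin_num.
  rewrite ge0_fin_numE //; move/integrableP: intX => [_ iX].
  apply: le_lt_trans iX; apply: ge0_le_integral => //.
  - by move=> w _; rewrite lee_fin.
  - exact/measurable_EFinP/measurableT_comp.
  - by apply/measurable_EFinP; apply: measurableT_comp => //.
  - move=> w _ /=; rewrite lee_fin /phi ge_max normr_ge0 andbT.
    by apply: le_trans (ler_norm _); rewrite lerBlDr lerDl ltW.
set y := fine Y.
have Yy : Y = y%:E by rewrite fineK.
have L2 := @indep_int _ _ _ P X Xs H phi mphi phi0 mX mXs mH dXs ind.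
pose G := fun w => (p + \sum_(i < H w) phi (Xs i w))%R.
have mG : measurable_fun setT G.
  apply: (@meas_compH _ _ _ H (fun n w => p + \sum_(i < n) phi (Xs i w))%R mH) => n.
  apply: measurable_funD; first exact: measurable_cst.
  apply: (@meas_bigsum _ _ _ (fun i w => phi (Xs i w))) => i.
  exact: measurableT_comp.
have mM : measurable_fun setT (fun w => max_upto (fun i => Xs i w) (H w)).
  apply: (@meas_compH _ _ _ H (fun n w => max_upto (fun i => Xs i w) n) mH) => n.
  exact: (@meas_bigmax _ _ _ Xs n mXs).
have G0 w : 0 <= G w.
  by rewrite /G; apply: addr_ge0; [exact: ltW | apply: sumr_ge0 => i _; exact: phi0].
apply: (@le_trans _ _ (\int[P]_w (G w)%:E)%E).
  apply: ge0_le_integral => //.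
  - by move=> w _; rewrite lee_fin max_upto_ge0.
  - exact/measurable_EFinP.
  - exact/measurable_EFinP.
  - by move=> w _; rewrite lee_fin; apply: max_upto_le; exact: ltW.
have Gn n : (\int[P]_(w in A n) (G w)%:E =
    p%:E * P (A n) + y%:E * ((n%:R)%:E * P (A n)))%E.
  rewrite (eq_integral (fun w => p%:E + \sum_(i < n) (phi (Xs i w))%:E)%E); last first.
    by move=> w; rewrite inE /= => Hw; rewrite /G Hw EFinD sumEFin.
  rewrite ge0_integralD //; last 4 first.
    - exact: mH.
    - by move=> w _; rewrite lee_fin ltW.
    - by move=> w _; apply: sume_ge0 => i _; rewrite lee_fin.
    - apply: emeasurable_sum => i; apply/measurable_EFinP.
      by apply: measurable_funTS; exact: measurableT_comp.
  rewrite integral_cst //; last exact: mH.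
  congr (_ + _)%E.
  rewrite ge0_integral_sum //; last 3 first.
    - exact: mH.
    - move=> i; apply/measurable_EFinP.
      by apply: measurable_funTS; exact: measurableT_comp.
    - by move=> i w _; rewrite lee_fin.
  under eq_bigr do rewrite L2.
  rewrite sumr_const card_ord.
  transitivity ((n%:R)%:E * (P (A n) * Y))%E; first by rewrite mule_natl.
  by rewrite muleA muleC Yy.
rewrite (@int_decomp _ _ _ P H _ mH); last 2 first.
  - exact/measurable_EFinP.
  - by move=> w; rewrite lee_fin.
rewrite (eq_eseriesr (fun n _ => Gn n)) nneseriesD; last 2 first.
  - by move=> n _ _; apply: mule_ge0 => //; rewrite lee_fin ltW.
  - move=> n _ _; apply: mule_ge0; first by rewrite lee_fin fine_ge0.
    by apply: mule_ge0.
rewrite nneseriesZl // sumP mule1 nneseriesZl; last by move=> n _; apply: mule_ge0.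
rewrite -muE muc.
have mS : measurable [set w | p <= X w].
  have -> : [set w | p <= X w] = X @^-1` `[p, +oo[.
    by apply/seteqP; split => w /=; rewrite in_itv /= andbT.
  by rewrite -[Z in measurable Z]setTI; apply: mX.
have IS : (\int[P]_(w in [set w | (p <= X w)%R]) (X w)%:E = Y + p%:E * (c^-1)%:E)%E.
  rewrite (eq_integral (fun w => (phi (X w))%:E + p%:E)%E); last first.
    move=> w; rewrite inE /= => pX; rewrite /phi max_l ?subr_ge0 //.
    by rewrite -EFinD subrK.
  rewrite ge0_integralD //; last 3 first.
    - by move=> w _; rewrite lee_fin.
    - apply/measurable_EFinP; apply: measurable_funTS.
      exact: measurableT_comp.
    - by move=> w _; rewrite lee_fin ltW.
  rewrite integral_cst // -PXp; congr (_ + _)%E.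
  rewrite /Y integral_mkcond; apply: eq_integral => w _; rewrite /patch.
  case: ifPn => // /negP; rewrite inE /= => /negP; rewrite -ltNge => Xp.
  by rewrite /phi max_r // subr_le0 ltW.
rewrite /cond_exp_event IS PXp /= invrK Yy.
rewrite -!EFinM -EFinD lee_fin.
by rewrite mulrDl -mulrA mulVf // mulr1 addrC.
Qed.
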